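(* Let $\Gamma$ be a connected imprimitive strongly regular graph. Then $E(\Gamma)=E(\bar\Gamma)$ if and only if $\Gamma\cong K_{m\times m}$ for some integer $m>1$. In this case $E(K_{m\times m})=2(m-1)m$, and hence $4\mid E(K_{m\times m})$.
   Context: A strongly regular graph with parameters $(n,k,e,d)$ is a $k$-regular simple graph on $n$ vertices, neither complete nor edgeless, in which every two adjacent vertices have exactly $e$ common neighbours and every two distinct non-adjacent vertices have exactly $d$ common neighbours. It is primitive if both it and its complement are connected, and imprimitive otherwise. $K_{a\times m}$ denotes the complete multipartite graph with $a$ parts each of size $m$. The energy $E(\Gamma)$ is the sum of the absolute values of the adjacency eigenvalues (with multiplicity); $\bar\Gamma$ is the complement. *)

(* Defs.v *)
From HB Require Import structures.
From mathcomp Require Import all_boot all_order all_algebra all_field.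
Set Implicit Arguments. Unset Strict Implicit. Unset Printing Implicit Defensive.
Import Order.TTheory GRing.Theory Num.Theory.
Local Open Scope ring_scope.

Definition simple_graph (T : finType) (e : rel T) : Prop :=
  symmetric e /\ irreflexive e.

Definition compl_graph (T : finType) (e : rel T) : rel T :=
  [rel x y | (x != y) && ~~ e x y].

Definition common_nbrs (T : finType) (e : rel T) (x y : T) : nat :=
  #|[set z | e x z && e y z]|.

Definition srg_params (T : finType) (e : rel T) (k l mu : nat) : Prop :=
  [/\ forall x, #|[set y | e x y]| = k,
      exists x y, (x != y) && ~~ e x y,
      exists x y, e x y,
      forall x y, e x y -> common_nbrs e x y = l
    & forall x y, x != y -> ~~ e x y -> common_nbrs e x y = mu].

Definition strongly_regular (T : finType) (e : rel T) : Prop :=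
  simple_graph e /\ exists k l mu, srg_params e k l mu.

Definition connected_graph (T : finType) (e : rel T) : Prop :=
  forall x y : T, connect e x y.

Definition primitive_graph (T : finType) (e : rel T) : Prop :=
  connected_graph e /\ connected_graph (compl_graph e).

Definition imprimitive_graph (T : finType) (e : rel T) : Prop :=
  ~ primitive_graph e.

Definition adj_mx (T : finType) (e : rel T) : 'M[algC]_#|T| :=
  \matrix_(i, j) (e (enum_val i) (enum_val j))%:R.

(* The eigenvalues, with multiplicity: the roots of the characteristic polynomial. *)
Definition eigenvalues (T : finType) (e : rel T) : seq algC :=
  sval (closed_field_poly_normal (char_poly (adj_mx e))).

Definition energy (T : finType) (e : rel T) : algC :=
  \sum_(z <- eigenvalues e) `|z|.

(* complete multipartite graph K_{a x m}: vertices (part, index) *)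
Definition Kmulti (a m : nat) : rel ('I_a * 'I_m) :=
  [rel x y | x.1 != y.1].

Definition graph_iso (T T' : finType) (e : rel T) (e' : rel T') : Prop :=
  exists f : T -> T', bijective f /\ forall x y, e x y = e' (f x) (f y).
Arguments Kmulti a m : clear implicits.

(* Main.v *)
Require Import Defs.
From HB Require Import structures.
From mathcomp Require Import all_boot all_order all_algebra all_field.
From mathcomp Require Import zify ring.
Import Order.TTheory GRing.Theory Num.Theory.
Local Open Scope ring_scope.

Lemma char_poly_conj n (P D : 'M[algC]_n) : P \in unitmx ->
  char_poly (invmx P *m D *m P) = char_poly D.
Proof.
move=> Pu; rewrite /char_poly /char_poly_mx.
have -> : 'X%:M - map_mx polyC (invmx P *m D *m P) =
   map_mx polyC (invmx P) *m ('X%:M - map_mx polyC D) *m map_mx polyC P.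
  rewrite !map_mxM mulmxBr mulmxBl; congr (_ - _).
  rewrite scalar_mxC -mulmxA -map_mxM mulVmx // map_mx1 mulmx1 //.
rewrite !det_mulmx mulrC mulrA -det_mulmx -map_mxM mulmxV // map_mx1 det1 mul1r //.
Qed.

Lemma adj_normal (T : finType) (e : rel T) : symmetric e -> adj_mx e \is normalmx.
Proof.
move=> se; apply/normalmxP.
suff -> : map_mx Num.conj (adj_mx e)^T = adj_mx e by [].
apply/matrixP => i j; rewrite !mxE conjC_nat se //.
Qed.

Lemma adj_spec (T : finType) (e : rel T) : symmetric e ->
  exists (P : 'M[algC]_#|T|) (d : 'rV[algC]_#|T|),
    [/\ P \in unitmx, adj_mx e = invmx P *m diag_mx d *m P &
        energy e = \sum_i `|d 0 i|].
Proof.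
move=> se; have /orthomx_spectralP Ae := adj_normal _ _ se.
have Pu := spectral_unit (adj_mx e).
set P := spectralmx _ in Ae Pu; set d := spectral_diag _ in Ae.
exists P, d; split => //.
rewrite /energy /eigenvalues; case: closed_field_poly_normal => s /= Hs.
have : perm_eq s [seq d 0 i | i <- enum 'I_#|T|].
  apply: prod_XsubC_eq; rewrite big_map.
  rewrite (monicP (char_poly_monic _)) scale1r in Hs.
  rewrite -Hs Ae char_poly_conj //.
  rewrite char_poly_trig ?diag_mx_is_trig // big_enum /=.
  by apply: eq_bigr => i _; rewrite mxE eqxx mulr1n.
move=> /(perm_big _ (F:=fun z => `|z|)) ->; rewrite big_map big_enum //.
Qed.

Lemma spec_facts n (P : 'M[algC]_n) (d : 'rV[algC]_n) (A : 'M[algC]_n) :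
  P \in unitmx -> A = invmx P *m diag_mx d *m P ->
  [/\ \sum_i d 0 i = \tr A, \sum_i d 0 i ^+ 2 = \tr (A *m A) &
      forall c3 c2 c1 c0 : algC,
        c3 *: (A *m A *m A) + c2 *: (A *m A) + c1 *: A + c0%:M = 0 ->
        forall i, c3 * d 0 i ^+ 3 + c2 * d 0 i ^+ 2 + c1 * d 0 i + c0 = 0].
Proof.
move=> Pu ->; set D := diag_mx d.
have cj X Y : invmx P *m X *m P *m (invmx P *m Y *m P) = invmx P *m (X *m Y) *m P.
  by rewrite !mulmxA -[invmx P *m X *m P *m invmx P]mulmxA mulmxV // mulmx1.
have tr X : \tr (invmx P *m X *m P) = \tr X.
  by rewrite mxtrace_mulC !mulmxA mulmxV // mul1mx.
have Dii i : D i i = d 0 i by rewrite mxE eqxx mulr1n.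
split.
- by rewrite tr mxtrace_diag.
- rewrite cj tr /mxtrace; apply: eq_bigr => i _.
  by rewrite mul_diag_mx mxE Dii expr2.
move=> c3 c2 c1 c0; rewrite !cj.
set M := c3 *: (D *m D *m D) + c2 *: (D *m D) + c1 *: D + c0%:M.
have -> : c3 *: (invmx P *m (D *m D *m D) *m P) + c2 *: (invmx P *m (D *m D) *m P)
   + c1 *: (invmx P *m D *m P) + c0%:M = invmx P *m M *m P.
  rewrite /M !mulmxDr !mulmxDl -!scalemxAr -!scalemxAl.
  by rewrite mul_mx_scalar -scalemxAl mulVmx // scalemx1.
move=> H i.
have M0 : M = 0.
  have := congr1 (fun X => P *m X *m invmx P) H.
  by rewrite /= !mulmxA mulmxV // mul1mx -mulmxA mulmxV // mulmx1 mulmx0 mul0mx.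
move/matrixP: M0 => /(_ i i); rewrite /M /D -!mulmxA !mul_diag_mx !mxE eqxx !mulr1n => <-.
by rewrite !exprS expr0 !mulr1.
Qed.

Lemma sum_enum_val (T : finType) (F : T -> algC) :
  \sum_(i < #|T|) F (enum_val i) = \sum_x F x.
Proof. by rewrite -(big_enum_val (A:=T) F). Qed.

Lemma sum_bool_card (T : finType) (P : pred T) :
  \sum_x (P x)%:R = (#|[set x | P x]|)%:R :> algC.
Proof.
rewrite -sum1_card natr_sum [RHS]big_mkcond /=; apply: eq_bigr => x _.
by rewrite inE; case: (P x).
Qed.

Lemma class_card (T : finType) (e : rel T) k x :
  #|[set y | e x y]| = k -> #|[set y | ~~ e x y]| = (#|T| - k)%N.
Proof.
move=> dk; have -> : [set y | ~~ e x y] = ~: [set y | e x y].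
  by apply/setP => y; rewrite !inE.
by rewrite -dk -(cardsC [set y | e x y]) addKn.
Qed.

Lemma common_card (T : finType) (e : rel T) k :
  symmetric e -> (forall x y z, ~~ e x y -> ~~ e y z -> ~~ e x z) ->
  (forall x, #|[set y | e x y]| = k) ->
  forall x y, (#|[set z | e x z && e z y]| + e x y * (#|T| - k) = k)%N.
Proof.
move=> se te dk x y.
case exy: (e x y); last first.
  rewrite mul0n addn0 -(dk x); apply: eq_card => z; rewrite !inE.
  case exz: (e x z) => //=; apply/negP => /negP nzy.
  by move: (te x y z); rewrite exy (se y z) nzy exz => /(_ isT isT).
have kn : (k <= #|T|)%N by rewrite -(dk x) max_card.
set S := [set z | e x z && e z y].
have eS : ~: S = [set z | ~~ e x z] :|: [set z | ~~ e y z].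
  by apply/setP => z; rewrite !inE negb_and (se z y).
move: (cardsC S) (cardsUI [set z | ~~ e x z] [set z | ~~ e y z]); rewrite eS.
rewrite !(class_card _ _ _ _ (dk _)).
have -> : [set z | ~~ e x z] :&: [set z | ~~ e y z] = set0.
  apply/setP => z; rewrite !inE; apply/negP => /andP [nxz nyz].
  by move: (te x z y nxz); rewrite (se z y) nyz exy => /(_ isT).
rewrite cards0 => h1 h2; lia.
Qed.

Lemma adj_sq (T : finType) (e : rel T) k :
  symmetric e -> (forall x y z, ~~ e x y -> ~~ e y z -> ~~ e x z) ->
  (forall x, #|[set y | e x y]| = k) ->
  adj_mx e *m adj_mx e = k%:R *: const_mx 1 - (#|T| - k)%:R *: adj_mx e.
Proof.
move=> se te dk; apply/matrixP => i j; rewrite !mxE.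
under eq_bigr do rewrite !mxE -natrM mulnb.
rewrite (sum_enum_val _ (fun z => (e (enum_val i) z && e z (enum_val j))%:R)).
rewrite sum_bool_card mulr1.
have := common_card _ _ _ se te dk (enum_val i) (enum_val j).
move=> /(congr1 (fun n => n%:R : algC)); rewrite natrD natrM => <-.
by rewrite [X in _ + X - _]mulrC addrK.
Qed.

Lemma adj_J (T : finType) (e : rel T) k :
  (forall x, #|[set y | e x y]| = k) ->
  adj_mx e *m (const_mx 1 : 'M_#|T|) = k%:R *: (const_mx 1 : 'M_#|T|).
Proof.
move=> dk; apply/matrixP => i j; rewrite !mxE.
under eq_bigr do rewrite !mxE mulr1.
rewrite (sum_enum_val _ (fun z => (e (enum_val i) z)%:R)) sum_bool_card mulr1.
by rewrite dk.
Qed.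

Lemma J_adj (T : finType) (e : rel T) k : symmetric e ->
  (forall x, #|[set y | e x y]| = k) ->
  (const_mx 1 : 'M_#|T|) *m adj_mx e = k%:R *: (const_mx 1 : 'M_#|T|).
Proof.
move=> se dk; apply/matrixP => i j; rewrite !mxE.
under eq_bigr do rewrite !mxE mul1r se.
rewrite (sum_enum_val _ (fun z => (e (enum_val j) z)%:R)) sum_bool_card mulr1.
by rewrite dk.
Qed.

Lemma J_J n : (const_mx 1 : 'M[algC]_n) *m (const_mx 1 : 'M[algC]_n) = n%:R *: (const_mx 1 : 'M[algC]_n).
Proof.
apply/matrixP => i j; rewrite !mxE.
under eq_bigr do rewrite !mxE mulr1.
by rewrite sumr_const card_ord mulr1.
Qed.

Lemma tr_adj (T : finType) (e : rel T) : irreflexive e -> \tr (adj_mx e) = 0.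
Proof.
move=> ie; rewrite /mxtrace big1 // => i _; rewrite mxE ie //.
Qed.

Lemma adj_compl (T : finType) (e : rel T) : irreflexive e ->
  adj_mx (compl_graph e) = const_mx 1 - 1%:M - adj_mx e.
Proof.
move=> ie; apply/matrixP => i j; rewrite !mxE /compl_graph /= (inj_eq enum_val_inj).
case: eqP => [->|_] /=; first by rewrite ie subrr subr0.
by case: (e _ _); rewrite ?subr0 ?subrr.
Qed.

Lemma tr_J n : \tr (const_mx 1 : 'M[algC]_n) = n%:R.
Proof.
rewrite /mxtrace; under eq_bigr do rewrite mxE.
by rewrite sumr_const card_ord.
Qed.

Lemma cubic_alg n (A J : 'M[algC]_n) (k m : algC) :
  A *m A = k *: J - m *: A -> J *m A = k *: J ->
  1 *: (A *m A *m A) + (m - k) *: (A *m A) + (- (m * k)) *: A + (0 : algC)%:M = 0.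
Proof.
move=> AA JA. rewrite AA mulmxBl -scalemxAl -scalemxAl JA AA.
apply/matrixP => i j; rewrite !mxE mul0rn.
move: (J i j) (A i j) => x y. ring.
Qed.

Lemma quad_alg n (A J : 'M[algC]_n) (k m : algC) :
  A *m A = k *: J - m *: A -> J *m A = k *: J -> A *m J = k *: J ->
  J *m J = (m + k) *: J ->
  let C := J - 1%:M - A in
  0 *: (C *m C *m C) + 1 *: (C *m C) + (- (m - 2%:R)) *: C + (- (m - 1))%:M = 0.
Proof.
move=> AA JA AJ JJ C; rewrite /C scale0r add0r.
rewrite mulmxBl mulmxBl mulmxBr mulmxBr mulmxBr mulmxBr mulmxBr mulmxBr.
rewrite JJ AJ JA AA !mul1mx !mulmx1.
apply/matrixP => i j; rewrite !mxE.
move: (J i j) (A i j) => x y.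
by case: (i == j); rewrite ?mulr1n ?mulr0n; ring.
Qed.

Lemma multi_energy (T : finType) (e : rel T) k m :
  symmetric e -> irreflexive e -> (forall x y z, ~~ e x y -> ~~ e y z -> ~~ e x z) ->
  (forall x, #|[set y | e x y]| = k) -> (m + k = #|T|)%N -> (0 < m)%N ->
  energy e = (2 * k)%:R /\
  energy (compl_graph e) * m%:R = (#|T| * (2 * m - 2))%:R.
Proof.
move=> se ie te dk mk m0.
have emk : (#|T| - k)%N = m by rewrite -mk addnK.
have AA := adj_sq _ _ _ se te dk; rewrite emk in AA.
have JA := J_adj _ _ _ se dk.
have AJ := adj_J _ _ _ dk.
have nz : (#|T|%:R : algC) != 0 by rewrite pnatr_eq0 -mk; lia.
have nE : (#|T|%:R : algC) = m%:R + k%:R by rewrite -mk natrD.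
have JJ := J_J #|T|; rewrite nE in JJ.
have tA := tr_adj _ _ ie.
have tAA : \tr (adj_mx e *m adj_mx e) = k%:R * #|T|%:R.
  by rewrite AA linearB /= !linearZ /= tr_J tA mulr0 subr0.
split.
  have [P [d [Pu Ae En]]] := adj_spec _ _ se.
  have [t1 t2 pr] := spec_facts _ _ _ _ Pu Ae.
  have pi := pr _ _ _ _ (cubic_alg _ _ _ _ _ AA JA).
  apply: (mulIf nz); rewrite En mulr_suml.
  transitivity (\sum_i ((m%:R - k%:R) * d 0 i + 2%:R * d 0 i ^+ 2)).
    apply: eq_bigr => i _; have := pi i.
    have -> : 1 * d 0 i ^+ 3 + (m%:R - k%:R) * d 0 i ^+ 2 + - (m%:R * k%:R) * d 0 i + 0
       = d 0 i * (d 0 i + m%:R) * (d 0 i - k%:R) by ring.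
    move/eqP; rewrite !mulf_eq0 addr_eq0 subr_eq0 => /orP [/orP [] | ] /eqP ->.
    - by rewrite normr0 mul0r; ring.
    - by rewrite normrN normr_nat nE; ring.
    - by rewrite normr_nat nE; ring.
  rewrite big_split /= -!mulr_sumr t1 t2 tAA tA mulr0 add0r.
  by rewrite natrM mulrA.
have sc : symmetric (compl_graph e).
  by move=> x y; rewrite /compl_graph /= eq_sym se.
have ic : irreflexive (compl_graph e) by move=> x; rewrite /compl_graph /= eqxx.
have [P [d [Pu Ae En]]] := adj_spec _ _ sc.
have [t1 t2 pr] := spec_facts _ _ _ _ Pu Ae.
have Ce := adj_compl _ _ ie.
have := quad_alg _ _ _ _ _ AA JA AJ JJ; rewrite /= -Ce => quad.
have pi := pr _ _ _ _ quad.
rewrite En mulr_suml.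
transitivity (\sum_(i < #|T|) (2%:R * m%:R - 2%:R + (m%:R - 2%:R) * d 0 i)).
  apply: eq_bigr => i _; have := pi i.
  have -> : 0 * d 0 i ^+ 3 + 1 * d 0 i ^+ 2 + - (m%:R - 2%:R) * d 0 i + - (m%:R - 1)
     = (d 0 i - (m%:R - 1)) * (d 0 i + 1) by ring.
  move/eqP; rewrite !mulf_eq0 !addr_eq0 opprK => /orP [] /eqP ->.
  - rewrite ger0_norm; first by ring.
    by rewrite subr_ge0 ler1n.
  - by rewrite normrN normr1; ring.
rewrite big_split /= -!mulr_sumr t1 (tr_adj _ _ ic) mulr0 addr0 sumr_const card_ord.
rewrite -mulr_natr natrM natrB; last by lia.
by rewrite natrM; ring.
Qed.

Lemma srg_trans (T : finType) (e : rel T) :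
  strongly_regular e -> connected_graph e -> imprimitive_graph e ->
  forall x y z, ~~ e x y -> ~~ e y z -> ~~ e x z.
Proof.
move=> [[se ie] [k [l [mu [dk _ _ hl _]]]]] ce ip.
have nc : ~ connected_graph (compl_graph e) by move=> cc; apply: ip; split.
have : ~~ [forall u, [forall v, connect (compl_graph e) u v]].
  apply/negP => /forallP H; apply: nc => u v; exact: (forallP (H u) v).
move=> /forallPn [u /forallPn [v ncuv]].
have uv : u != v by apply/eqP => h; rewrite h connect0 in ncuv.
have euv : e u v.
  apply/negPn/negP => nuv; move/negP: ncuv; apply; apply: connect1.
  by rewrite /compl_graph /= uv nuv.
have cardU x z : e x z ->
    (#|[set w | e x w] :|: [set w | e z w]| + l = k + k)%N.
  move=> exz; rewrite -(hl x z exz).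
  transitivity (#|[set w | e x w]| + #|[set w | e z w]|)%N; last by rewrite !dk.
  rewrite -cardsUI; congr (_ + _)%N.
  by rewrite /common_nbrs; apply: eq_card => w; rewrite !inE.
have Uuv : [set w | e u w] :|: [set w | e v w] = setT.
  apply/setP => w; rewrite !inE; apply/negPn/negP; rewrite negb_or => /andP [nuw nvw].
  have wu : u != w by apply/eqP => h; move: nvw; rewrite -h se euv.
  have wv : w != v by apply/eqP => h; move: nuw; rewrite h euv.
  move/negP: ncuv; apply; apply: (connect_trans (y := w)); apply: connect1;
    rewrite /compl_graph /= ?wu ?wv ?nuw //= se //.
have key x z : e x z -> forall w, e x w || e z w.
  move=> exz w.
  have := cardU x z exz; rewrite -(cardU u v euv) Uuv cardsT => /addIn h.
  have : [set w | e x w] :|: [set w | e z w] == setT.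
    by rewrite eqEcard subsetT cardsT h leqnn.
  by move/eqP/setP/(_ w); rewrite !inE.
move=> x y z nxy nyz; apply/negP => exz.
by have := key x z exz y; rewrite (negbTE nxy) se (negbTE nyz).
Qed.

Lemma build_iso (T : finType) (e : rel T) m :
  symmetric e -> irreflexive e -> (forall x y z, ~~ e x y -> ~~ e y z -> ~~ e x z) ->
  (forall x, #|[set y | ~~ e x y]| = m) -> #|T| = (m * m)%N -> (0 < m)%N ->
  graph_iso e (Kmulti m m).
Proof.
move=> se ie te cm nT m0.
have [m' em] : exists m', m = m'.+1 by exists m.-1; lia.
subst m.
pose R := fun x y => ~~ e x y.
pose cl x := [set y in [set: T] | R x y].
have clE x : cl x = [set y | ~~ e x y] by apply/setP => y; rewrite !inE.
have clxx x : x \in cl x by rewrite !inE /R ie.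
have cl_eq x y : (cl x == cl y) = ~~ e x y.
  apply/eqP/idP => [h|nxy].
    by move: (clxx y); rewrite -h !inE.
  apply/setP => z; rewrite !inE; apply/idP/idP => h.
    by apply: te h; rewrite se.
  exact: te nxy h.
pose P := equivalence_partition R [set: T].
have eqR : {in [set: T] & &, equivalence_rel R}.
  move=> x y z _ _ _; split; first by rewrite /R ie.
  move=> nxy; apply/idP/idP => h; first by apply: te h; rewrite /R se.
  exact: te nxy h.
have parP := equivalence_partitionP eqR.
have clP x : cl x \in P by apply: imset_f; rewrite inE.
have unif : {in P, forall A : {set T}, #|A| = m'.+1}.
  move=> A /imsetP [x _ ->]; rewrite -(cm x); apply: eq_card => y; rewrite !inE.
  by [].
have cP : #|P| = m'.+1.
  have := card_uniform_partition unif parP.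
  by rewrite cardsT nT => h; apply/eqP; rewrite -(eqn_pmul2r m0) -h.
pose f x : 'I_m'.+1 * 'I_m'.+1 :=
  (inord (index (cl x) (enum P)), inord (index x (enum (cl x)))).
have i1 x : (index (cl x) (enum P) < m'.+1)%N.
  by rewrite -cP cardE index_mem mem_enum.
have i2 x : (index x (enum (cl x)) < m'.+1)%N.
  by rewrite -(cm x) -clE cardE index_mem mem_enum clxx.
have f1 x y : ((f x).1 == (f y).1) = (cl x == cl y).
  rewrite /f /= -val_eqE /= !inordK //; apply/eqP/eqP => [h|->//].
  have eP z : cl z \in enum P by rewrite mem_enum.
  by rewrite -[cl x](nth_index (cl x) (eP x)) h (nth_index _ (eP y)).
have finj : injective f.
  move=> x y fxy; have cxy : cl x = cl y by apply/eqP; rewrite -f1 fxy.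
  have := congr1 (fun p => val p.2) fxy; rewrite /= !inordK // cxy => h.
  have ex : x \in enum (cl y) by rewrite mem_enum -cxy clxx.
  have ey : y \in enum (cl y) by rewrite mem_enum clxx.
  by rewrite -[x](nth_index x ex) h (nth_index _ ey).
exists f; split.
  by apply: (inj_card_bij finj); rewrite card_prod !card_ord nT.
by move=> x y; rewrite /Kmulti /= f1 cl_eq negbK.
Qed.

Lemma deg_K m (x : 'I_m * 'I_m) : #|[set y : 'I_m * 'I_m | x.1 != y.1]| = (m * m - m)%N.
Proof.
have -> : [set y : 'I_m * 'I_m | x.1 != y.1] = ~: setX [set x.1] setT.
  by apply/setP => y; rewrite !inE /= eq_sym andbT.
by rewrite cardsCs setCK cardsX cards1 cardsT card_prod !card_ord mul1n.
Qed.

Lemma K_energy m : (0 < m)%N ->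
  energy (Kmulti m m) = (2 * (m * m - m))%:R /\
  energy (compl_graph (Kmulti m m)) * m%:R = (m * m * (2 * m - 2))%:R.
Proof.
move=> m0.
have se : symmetric (Kmulti m m) by move=> x y; rewrite /Kmulti /= eq_sym.
have ie : irreflexive (Kmulti m m) by move=> x; rewrite /Kmulti /= eqxx.
have te : forall x y z, ~~ Kmulti m m x y -> ~~ Kmulti m m y z -> ~~ Kmulti m m x z.
  by move=> x y z; rewrite /Kmulti /= !negbK => /eqP -> .
have := multi_energy _ _ (m * m - m) m se ie te (deg_K m).
rewrite card_prod card_ord => h; apply: h => //; nia.
Qed.

Lemma four_dvd m : (0 < m)%N -> (4 %| 2 * (m - 1) * m)%N.
Proof.
case: m => // m _; rewrite subSS subn0 -mulnA (_ : 4 = 2 * 2)%N //.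
rewrite dvdn_pmul2l // dvdn2 oddM /=; by case: (odd m).
Qed.

Local Close Scope ring_scope.
Lemma arith1 k m : 0 < m -> 2 * k * m = (m + k) * (2 * m - 2) -> k = m * m - m.
Proof.
case: m => // m _; rewrite (_ : 2 * m.+1 - 2 = 2 * m); last by lia.
move=> h; nia.
Qed.

Lemma arith2 m : 0 < m * m - m -> 1 < m.
Proof. by case: m => [|[|m]]. Qed.

Lemma arith3 m : m <= m * m.
Proof. by case: m => // m; rewrite leq_pmull. Qed.

Lemma arith4 m : 0 < m -> 2 * (m * m - m) * m = m * m * (2 * m - 2).
Proof.
case: m => // m _; rewrite (_ : 2 * m.+1 - 2 = 2 * m); last by lia.
rewrite (_ : m.+1 * m.+1 - m.+1 = m.+1 * m); last by rewrite mulnS addKn.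
nia.
Qed.

Lemma arith5 m : 1 < m -> 2 * (m * m - m) = 2 * (m - 1) * m.
Proof. by move=> _; rewrite -mulnA mulnBl mul1n. Qed.

Local Open Scope ring_scope.

Theorem mainTheorem6 (T : finType) (e : rel T) :
  strongly_regular e -> connected_graph e -> imprimitive_graph e ->
  (energy e = energy (compl_graph e) <->
     exists m : nat, (1 < m)%N /\ graph_iso e (Kmulti m m))
  /\ (forall m : nat, (1 < m)%N ->
        energy (Kmulti m m) = (2 * (m - 1) * m)%:R
        /\ (4 %| 2 * (m - 1) * m)%N).
Proof.
move=> srg ce ip.
split; last first.
  move=> m m1; split; last by apply: four_dvd; lia.
  have [-> _] := K_energy m (ltnW m1); congr (_ %:R); exact: arith5.
have te := srg_trans _ _ srg ce ip.
case: srg => [[se ie] [k [l [mu [dk [x0 [y0 _]] [x1 [y1 exy]] _ _]]]]].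
have kn : (k <= #|T|)%N by rewrite -(dk x0) max_card.
have mk : ((#|T| - k) + k = #|T|)%N by rewrite subnK.
have cm x : #|[set y | ~~ e x y]| = (#|T| - k)%N := class_card _ _ _ _ (dk x).
have m0 : (0 < #|T| - k)%N.
  by rewrite -(cm x0); apply/card_gt0P; exists x0; rewrite inE ie.
have k0 : (0 < k)%N by rewrite -(dk x1); apply/card_gt0P; exists y1; rewrite inE.
have [E1 E2] := multi_energy _ _ k _ se ie te dk mk m0.
set m := (#|T| - k)%N in mk cm m0 E1 E2.
have mnz : (m%:R : algC) != 0 by rewrite pnatr_eq0 -lt0n.
split.
  move=> EE.
  have h : (2 * k * m = #|T| * (2 * m - 2))%N.
    apply/eqP; rewrite -(eqr_nat algC) natrM -E1 EE E2 //.
  have km : k = (m * m - m)%N by apply: arith1 m0 _; rewrite mk.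
  have nT : #|T| = (m * m)%N by rewrite -mk km subnKC // arith3.
  exists m; split; first by apply: arith2; rewrite -km.
  exact: build_iso _ _ _ se ie te cm nT m0.
move=> [m' [m1 [f [fb fe]]]].
have nT : #|T| = (m' * m')%N by rewrite (bij_eq_card fb) card_prod card_ord.
have [g fg gf] := fb.
have kE : k = (m' * m' - m')%N.
  rewrite -(dk x0) -(deg_K m' (f x0)) -(card_imset _ (bij_inj fb)).
  apply: eq_card => y'; rewrite [in RHS]inE; apply/imsetP/idP.
    by move=> [y]; rewrite inE fe => h ->.
  by move=> h; exists (g y'); rewrite ?inE ?fe gf.
have mm : m = m' by rewrite /m nT kE subKn // arith3.
apply: (mulIf mnz); rewrite E2 E1 -natrM; congr (_ %:R); rewrite nT kE mm.
by rewrite arith4 //; lia.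
Qed.
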